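(* For every $n\ge 5$, the sensitivity to synchronism of elementary cellular automaton rule $8$ satisfies $\mu(f_{8,n})=\dfrac{\phi^{2n}+\phi^{-2n}-2^n}{3^n-2^{n+1}+2}$, where $\phi=\frac{1+\sqrt5}{2}$ is the golden ratio.
   Context: Cells are indexed by $\mathbb{Z}_n=\{0,\dots,n-1\}$, indices modulo $n$. Rule $8$ has local rule $r_8(x_1,x_2,x_3)=\neg x_1\wedge x_2\wedge x_3$ and global function $f_{8,n}(x)_i=r_8(x_{i-1},x_i,x_{i+1})$. An update schedule is an ordered partition $\Delta=(\Delta_1,\dots,\Delta_k)$ of $\mathbb{Z}_n$ into nonempty blocks; $\mathcal{P}_n$ is the set of them. For a block $B$ let $f^{(B)}(x)_i=f_{8,n}(x)_i$ if $i\in B$ and $x_i$ otherwise; $f^{(\Delta)}_{8,n}=f^{(\Delta_k)}\circ\cdots\circ f^{(\Delta_1)}$. The dynamics of $\Delta$ is the transition digraph with arcs $(x,f^{(\Delta)}_{8,n}(x))$; $\mathcal{D}(f_{8,n})$ is the set of distinct dynamics over $\Delta\in\mathcal{P}_n$. The sensitivity to synchronism is $\mu(f_{8,n})=|\mathcal{D}(f_{8,n})|/(3^n-2^{n+1}+2)$. *)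

(* Defs.v *)
From HB Require Import structures.
From mathcomp Require Import all_boot all_order all_algebra.
From mathcomp Require Import boolp reals.
Set Implicit Arguments. Unset Strict Implicit. Unset Printing Implicit Defensive.
Import Order.TTheory GRing.Theory Num.Theory.

Definition config (n : nat) := {ffun 'I_n -> bool}.

Definition r8 (x1 x2 x3 : bool) : bool := ~~ x1 && x2 && x3.

Definition f8 (n : nat) (x : config n) : config n :=
  [ffun i => r8 (x (ord_pred i)) (x i) (x (ordS i))].

Definition fblock (n : nat) (B : {set 'I_n}) (x : config n) : config n :=
  [ffun i => if i \in B then f8 x i else x i].

Definition fsched (n : nat) (D : seq {set 'I_n}) (x : config n) : config n :=
  foldl (fun y B => fblock B y) x D.

Definition is_update_schedule (n : nat) (D : seq {set 'I_n}) : Prop :=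
  all (fun B => B != set0) D /\ forall i : 'I_n, count (fun B : {set 'I_n} => i \in B) D = 1%N.

(* the dynamics (transition digraph x -> f^{(Delta)}(x)), represented by its
   (functional) arc map *)
Definition dynamics (n : nat) (D : seq {set 'I_n}) :
  {ffun config n -> config n} := [ffun x => fsched D x].

Definition dyn_set (n : nat) : {set {ffun config n -> config n}} :=
  [set F | `[< exists D : seq {set 'I_n}, is_update_schedule D /\ F = dynamics D >]].

Definition mu8 (R : realType) (n : nat) : R :=
  (#|dyn_set n|%:R / ((3%:R : R) ^+ n - (2%:R : R) ^+ n.+1 + 2%:R))%R.

Definition golden (R : realType) : R := ((1 + Num.sqrt (5%:R : R)) / 2%:R)%R.

(* Main.v *)
Require Import Defs.
From HB Require Import structures.
From mathcomp Require Import all_boot all_order all_algebra.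
From mathcomp Require Import boolp reals.
From mathcomp Require Import zify ring lra.
Import Order.TTheory GRing.Theory Num.Theory.
Set Implicit Arguments. Unset Strict Implicit. Unset Printing Implicit Defensive.

Definition lab := option bool.
Definition LB : lab := Some false.
Definition LF : lab := Some true.
Definition LE : lab := None.

Definition rk n (D : seq {set 'I_n}) (i : 'I_n) : nat :=
  find (fun B : {set 'I_n} => i \in B) D.

Definition sel n (r : 'I_n -> nat) (x y : config n) (i j : 'I_n) : bool :=
  if r j < r i then y j else x j.

Lemma fschedE n (B : {set 'I_n}) D x : fsched (B :: D) x = fsched D (fblock B x).
Proof. by []. Qed.

Lemma fsched_notin n (D : seq {set 'I_n}) x i :
  ~~ has (fun B : {set 'I_n} => i \in B) D -> fsched D x i = x i.
Proof.
elim: D x => [|B D IH] x; first by [].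
move=> /norP [iB hD].
by rewrite fschedE IH // ffunE (negbTE iB).
Qed.

Lemma fsched_sem n (D : seq {set 'I_n}) x :
  (forall i, count (fun B : {set 'I_n} => i \in B) D <= 1) ->
  forall i, has (fun B : {set 'I_n} => i \in B) D ->
  fsched D x i = r8 (sel (rk D) x (fsched D x) i (ord_pred i)) (x i)
                    (sel (rk D) x (fsched D x) i (ordS i)).
Proof.
elim: D x => [|B D IH] x hc i; first by [].
have hc' : forall i, count (fun B : {set 'I_n} => i \in B) D <= 1.
  by move=> j; move: (hc j) => /=; case: (j \in B) => //= h; lia.
have hnot : forall j, j \in B -> ~~ has (fun B : {set 'I_n} => j \in B) D.
  move=> j jB; move: (hc j) => /=; rewrite jB has_count; lia.
rewrite fschedE.
case iB: (i \in B) => hi; rewrite /= iB /= in hi.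
  rewrite fsched_notin ?hnot // ffunE iB /f8 ffunE.
  by rewrite /sel /rk /= iB !ltn0.
set y := fsched D (fblock B x).
have xi : fblock B x i = x i by rewrite ffunE iB.
have key : forall j, sel (rk (B :: D)) x y i j = sel (rk D) (fblock B x) y i j.
  move=> j; rewrite /sel /rk /= iB.
  case jB: (j \in B).
    have := hnot j jB; rewrite has_find -leqNgt => hj.
    move: hi; rewrite has_find => hi.
    have h1 : (find (fun B0 : {set 'I_n} => j \in B0) D < find (fun B0 : {set 'I_n} => i \in B0) D) = false.
      by apply/negbTE; rewrite -leqNgt; apply: leq_trans (ltnW hi) hj.
    rewrite h1 /=.
    by rewrite /y fsched_notin ?hnot.
  by rewrite ltnS ffunE jB.
by rewrite !key -xi; apply: IH.
Qed.

Definition solvesR n (r : 'I_n -> nat) (x y : config n) :=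
  forall i, y i = r8 (sel r x y i (ord_pred i)) (x i) (sel r x y i (ordS i)).

Lemma solvesR_uniq n (r : 'I_n -> nat) (x y y' : config n) :
  solvesR r x y -> solvesR r x y' -> y = y'.
Proof.
move=> hy hy'.
suff H : forall k i, r i < k -> y i = y' i.
  by apply/ffunP => i; apply: (H (r i).+1).
elim=> [|k IH] i //= hi.
rewrite hy hy' /sel; congr r8.
  by case: ifP => // h; apply: IH; apply: leq_trans h _.
by case: ifP => // h; apply: IH; apply: leq_trans h _.
Qed.

Definition labr n (r : 'I_n -> nat) : {ffun 'I_n -> lab} :=
  [ffun i => if r i < r (ordS i) then LF else if r (ordS i) < r i then LB else LE].

Definition solvesL n (L : {ffun 'I_n -> lab}) (x y : config n) : bool :=
  [forall i, y i == r8 (if L (ord_pred i) == LF then y (ord_pred i) else x (ord_pred i))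
                       (x i) (if L i == LB then y (ordS i) else x (ordS i))].

Lemma solvesLP n (L : {ffun 'I_n -> lab}) (x y : config n) :
  reflect (forall i, y i = r8 (if L (ord_pred i) == LF then y (ord_pred i) else x (ord_pred i))
                       (x i) (if L i == LB then y (ordS i) else x (ordS i)))
          (solvesL L x y).
Proof.
apply: (iffP forallP) => h i; first by apply/eqP.
by apply/eqP.
Qed.

Lemma solvesR_L n (r : 'I_n -> nat) (x y : config n) : solvesR r x y <-> solvesL (labr r) x y.
Proof.
have e1 : forall i, (labr r (ord_pred i) == LF) = (r (ord_pred i) < r i).
  move=> i; rewrite ffunE ord_predK.
  by case: ltngtP.
have e2 : forall i, (labr r i == LB) = (r (ordS i) < r i).
  move=> i; rewrite ffunE.
  by case: ltngtP.
split.
  by move=> h; apply/solvesLP => i; rewrite e1 e2 h.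
by move=> /solvesLP h i; rewrite h /sel -e1 -e2.
Qed.

Definition canon n (L : {ffun 'I_n -> lab}) : {ffun 'I_n -> lab} :=
  [ffun i => if (L i == LF) && (L (ordS i) == LB) then LE else L i].

Lemma solvesL_le n (L : {ffun 'I_n -> lab}) (x y : config n) j :
  solvesL L x y -> y j -> x j.
Proof. by move=> /solvesLP h; rewrite h /r8 => /andP[/andP[]]. Qed.

Lemma solvesL_B n (L : {ffun 'I_n -> lab}) (x y : config n) i :
  solvesL L x y -> L i == LB -> (x i && y (ordS i)) = false.
Proof.
move=> /solvesLP h /eqP hi; rewrite (h (ordS i)) ordSK hi /=.
by case: (x i).
Qed.

Lemma canonB n (L : {ffun 'I_n -> lab}) i : (canon L i == LB) = (L i == LB).
Proof. by rewrite ffunE; case: ifP => // /andP[/eqP -> _]. Qed.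

Lemma canonF n (L : {ffun 'I_n -> lab}) i :
  (canon L (ord_pred i) == LF) = (L (ord_pred i) == LF) && (L i != LB).
Proof.
rewrite ffunE ord_predK.
case: (L (ord_pred i) =P LF) => [->|h1] /=; first by case: (L i == LB).
by apply/eqP.
Qed.

Lemma solvesL_canon_aux n (L L' : {ffun 'I_n -> lab}) (x y : config n) :
  (forall i, (L' i == LB) = (L i == LB)) ->
  (forall i, L i != LB -> (L' (ord_pred i) == LF) = (L (ord_pred i) == LF)) ->
  solvesL L x y -> solvesL L' x y.
Proof.
move=> hB hF hs; have hs' := hs; move/solvesLP: hs => h.
apply/solvesLP => i.
case hi: (L i == LB).
  have hb := solvesL_B hs' hi.
  by rewrite (h i) hB hi /r8 -!andbA hb !andbF.
by rewrite h hB hi hF ?hi.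
Qed.

Lemma solvesL_canon n (L : {ffun 'I_n -> lab}) (x y : config n) :
  solvesL L x y = solvesL (canon L) x y.
Proof.
apply/idP/idP; apply: solvesL_canon_aux.
- by move=> i; rewrite canonB.
- by move=> i hi; rewrite canonF hi andbT.
- by move=> i; rewrite canonB.
- by move=> i; rewrite canonB => hi; rewrite canonF hi andbT.
Qed.

Definition Gd n (w : {ffun 'I_n -> lab}) : {ffun config n -> config n} :=
  [ffun x => odflt x [pick y | solvesL w x y]].

Lemma Gd_sol n (w : {ffun 'I_n -> lab}) (x y : config n) :
  solvesL w x y -> (forall y', solvesL w x y' -> y' = y) -> Gd w x = y.
Proof.
move=> hy hu; rewrite ffunE; case: pickP => [z hz|h] /=; first exact: hu.
by rewrite h in hy.
Qed.

Lemma Gd_solves n (w : {ffun 'I_n -> lab}) (x y : config n) :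
  solvesL w x y -> solvesL w x (Gd w x).
Proof.
move=> hy; rewrite ffunE; case: pickP => [z hz|h] //=.
by rewrite h in hy.
Qed.

Lemma labrB n (r : 'I_n -> nat) i : (labr r i == LB) = (r (ordS i) < r i).
Proof. by rewrite ffunE; case: ltngtP. Qed.

Lemma sched_dyn n (D : seq {set 'I_n}) :
  (forall i, count (fun B : {set 'I_n} => i \in B) D = 1) ->
  dynamics D = Gd (canon (labr (rk D))).
Proof.
move=> hc; apply/ffunP => x; rewrite ffunE.
have hR : solvesR (rk D) x (fsched D x).
  move=> i; apply: fsched_sem.
    by move=> j; rewrite hc.
  by rewrite has_count hc.
symmetry; apply: Gd_sol.
  by rewrite -solvesL_canon; apply/solvesR_L.
move=> y'; rewrite -solvesL_canon => /solvesR_L hy'.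
exact: solvesR_uniq hy' hR.
Qed.

Definition okl (a b : lab) : bool := ~~ ((a == LF) && (b == LB)).
Definition Canon n := [set w : {ffun 'I_n -> lab} | [forall i, okl (w i) (w (ordS i))]].
Definition Bad n := [set w : {ffun 'I_n -> lab} |
  ([forall i, w i != LB] && [exists i, w i != LE]) || [forall i, w i == LB]].
Definition Good n := Canon n :\: Bad n.

Lemma canon_Canon n (L : {ffun 'I_n -> lab}) : canon L \in Canon n.
Proof.
rewrite inE; apply/forallP => i; rewrite /okl canonB ffunE.
by case E1: (L i == LF); case E2: (L (ordS i) == LB) => //=; rewrite ?E1.
Qed.

Lemma cyc_inj n (h : 'I_n -> 'I_n) (f : 'I_n -> nat) :
  injective h -> (forall i, f i <= f (h i)) -> forall i, f i = f (h i).
Proof.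
move=> hinj hle.
have hs : \sum_i f (h i) = \sum_i f i by rewrite [RHS](reindex_inj hinj).
have : \sum_i (f (h i) - f i) == 0.
  have : \sum_i f (h i) = \sum_i (f (h i) - f i) + \sum_i f i.
    by rewrite -big_split /=; apply: eq_bigr => i _; rewrite subnK.
  by rewrite hs; move/eqP; rewrite -{1}[\sum_i f i]add0n eqn_add2r eq_sym.
rewrite sum_nat_eq0 => /forallP hz i.
by have := hz i; rewrite /= subn_eq0 => h2; apply/eqP; rewrite eqn_leq hle h2.
Qed.

Lemma canon_notBad n (r : 'I_n -> nat) (i0 : 'I_n) : canon (labr r) \notin Bad n.
Proof.
rewrite inE negb_or; apply/andP; split.
  apply/negP => /andP[/forallP hB /existsP[j hj]].
  have hle : forall i, r i <= r (ordS i).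
    by move=> i; have := hB i; rewrite canonB labrB -leqNgt.
  have heq := cyc_inj (@ordS_inj n) hle.
  have hL : forall i, labr r i = LE by move=> i; rewrite ffunE -heq ltnn.
  by move: hj; rewrite ffunE !hL.
apply/negP => /forallP hB.
have hle : forall i, r i <= r (ord_pred i).
  move=> i; have := hB (ord_pred i); rewrite canonB labrB ord_predK => h; exact: ltnW.
have heq := cyc_inj (@ord_pred_inj n) hle.
have := hB i0; rewrite canonB labrB (heq (ordS i0)) ordSK.
by rewrite ltnn.
Qed.

Definition atq n (q : 'I_n) (k : nat) : 'I_n := iter k (@ordS n) q.
Definition dq n (q i : 'I_n) : nat := (i + (n - q)) %% n.

Lemma atq_val n (q : 'I_n) k : val (atq q k) = (q + k) %% n.
Proof.
elim: k => [|k IH]; first by rewrite /= addn0 modn_small.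
change (val (ordS (atq q k)) = (q + k.+1) %% n).
by rewrite [val (ordS _)]/= IH -addn1 modnDml addn1 addnS.
Qed.

Lemma dq_lt n (q i : 'I_n) : dq q i < n.
Proof. by rewrite /dq ltn_pmod //; case: n q i => [[]|]. Qed.

Lemma atq_dq n (q i : 'I_n) : atq q (dq q i) = i.
Proof.
apply: val_inj; rewrite atq_val /dq modnDmr.
have -> : q + (i + (n - q)) = i + n.
  by have := ltn_ord q; lia.
by rewrite modnDr modn_small.
Qed.

Lemma dq_ordS n (q i : 'I_n) : dq q (ordS i) = (dq q i).+1 %% n.
Proof.
rewrite /dq /= (modnDml i.+1 (n - q) n) -[in RHS]addn1.
by rewrite (modnDml (i + (n - q)) 1 n) addn1 addSn.
Qed.

Lemma dq_q n (q : 'I_n) : dq q q = 0.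
Proof.
rewrite /dq; have -> : q + (n - q) = n by have := ltn_ord q; lia.
by rewrite modnn.
Qed.

Lemma dq_eq0 n (q i : 'I_n) : dq q i = 0 -> i = q.
Proof. by move=> h; rewrite -(atq_dq q i) h. Qed.

Lemma cyc_reach n (q : 'I_n) (P : 'I_n -> bool) :
  P q -> (forall i, P i -> P (ordS i)) -> forall i, P i.
Proof.
move=> hq hS i; rewrite -(atq_dq q i).
elim: (dq q i) => [|k IH] //; rewrite /atq iterS; exact: hS.
Qed.

Fixpoint pot n (L : {ffun 'I_n -> lab}) (q : 'I_n) (k : nat) : nat :=
  match k with
  | 0 => n
  | k'.+1 => let l := L (atq q k') in
             if l == LF then pot L q k' + n
             else if l == LB then (pot L q k').-1 else pot L q k'
  end.

Lemma pot_ge n (L : {ffun 'I_n -> lab}) q k : n <= pot L q k + k.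
Proof.
elim: k => [|k IH] /=; first by rewrite addn0.
case: ifP => _; first lia.
case: ifP => _; lia.
Qed.

Lemma pot_ge2 n (L : {ffun 'I_n -> lab}) q k j :
  j < k -> L (atq q j) == LF -> n + n <= pot L q k + k.
Proof.
elim: k => [|k IH] //= hj hF.
move: hj; rewrite ltnS leq_eqVlt => /orP[/eqP ej|hj].
  by rewrite -ej hF; have := pot_ge L q j; lia.
have := IH hj hF.
case: ifP => _; first lia.
case: ifP => _; lia.
Qed.

Definition rpot n (L : {ffun 'I_n -> lab}) (q : 'I_n) (i : 'I_n) : nat := pot L q (dq q i).

Lemma rpot_lab n (L : {ffun 'I_n -> lab}) (q : 'I_n) :
  L (ord_pred q) == LB -> (exists i, L i == LF) -> labr (rpot L q) = L.
Proof.
move=> hB [iF hF]; apply/ffunP => i; rewrite ffunE /rpot dq_ordS.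
have hlt := dq_lt q i.
have hpos : forall k, k < n -> 0 < pot L q k.
  move=> k hk; have := pot_ge L q k; lia.
case: (ltngtP (dq q i).+1 n) => hi.
- rewrite modn_small //= atq_dq.
  case: (L i =P LF) => [->|h1].
    by case: ifP => // h; exfalso; move: h; lia.
  case: (L i =P LB) => [->|h2].
    have := hpos _ hlt; move: (pot L q (dq q i)) => p hp.
    by rewrite ltnNge leq_pred /= ltn_predL hp.
  rewrite ltnn; case: (L i) h1 h2 => [[]|] //.
- lia.
-
  have hiq : i = ord_pred q.
    have : dq q (ordS i) = 0 by rewrite dq_ordS hi modnn.
    by move/dq_eq0 => <-; rewrite ordSK.
  rewrite hi modnn /=.
  have hjF : dq q iF < n.-1.
    have := dq_lt q iF; rewrite leq_eqVlt => /orP[/eqP e|]; last by lia.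
    have : iF = i.
      have h1 : ordS iF = q by apply: dq_eq0; rewrite dq_ordS e modnn.
      by apply: (@ordS_inj n); rewrite h1 hiq ord_predK.
    by move=> eiF; move: hF; rewrite eiF hiq (eqP hB).
  have := @pot_ge2 n L q n.-1 (dq q iF) hjF; rewrite atq_dq => /(_ hF).
  have -> : dq q i = n.-1 by lia.
  move=> h2; have h3 : n < pot L q n.-1 by lia.
  by rewrite ltnNge (ltnW h3) /= h3 hiq (eqP hB).
Qed.

Lemma good_realize n (w : {ffun 'I_n -> lab}) :
  w \in Good n -> exists r : 'I_n -> nat, canon (labr r) = w.
Proof.
rewrite in_setD => /andP[hnb hc].
case: (boolP [forall i, w i == LE]) => hE.
  exists (fun _ => 0); apply/ffunP => i; rewrite !ffunE ltnn /=.
  by rewrite (eqP (forallP hE i)).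
move: hnb; rewrite inE negb_or => /andP[h1 h2].
move: h1; rewrite negb_and hE orbF negb_forall => /existsP[p]; rewrite negbK => hp.
move: h2; rewrite negb_forall => /existsP[j hj].
move: hc; rewrite inE => /forallP hc.
have [t ht] : exists t, (w t != LB) && (w (ordS t) == LB).
  case: (boolP [exists t, (w t != LB) && (w (ordS t) == LB)]) => [/existsP //|].
  rewrite negb_exists => /forallP hn; exfalso.
  have := @cyc_reach n j (fun i => w i != LB) hj.
  have hS : forall i, w i != LB -> w (ordS i) != LB.
    by move=> i hi; have := hn i; rewrite hi /=.
  by move=> /(_ hS p); rewrite hp.
move: ht => /andP[ht1 ht2].
set L : {ffun 'I_n -> lab} := [ffun i => if (w i == LE) && (w (ordS i) == LB) then LF else w i].
have hLB : forall i, (L i == LB) = (w i == LB).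
  by move=> i; rewrite ffunE; case: ifP => // /andP[/eqP -> _].
exists (rpot L (ordS p)).
rewrite rpot_lab; first last.
- exists t; rewrite ffunE ht2 andbT.
  have := hc t; rewrite /okl (eqP ht2) eqxx andbT.
  by move: ht1; case: (w t) => [[]|].
- by rewrite ordSK hLB.
apply/ffunP => i; rewrite ffunE hLB.
have := hc i; rewrite /okl ffunE.
case E: (w (ordS i) == LB); rewrite ?andbF ?andbT //=.
by case: (w i) => [[]|].
Qed.

Definition blocks n (r : 'I_n -> nat) : seq {set 'I_n} :=
  [seq [set i | r i == k] | k <- iota 0 (\max_i r i).+1].

Lemma blocks_count n (r : 'I_n -> nat) i :
  count (fun B : {set 'I_n} => i \in B) (blocks r) = 1.
Proof.
rewrite count_map (eq_count (a2 := pred1 (r i))); last first.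
  by move=> k /=; rewrite inE eq_sym.
by rewrite count_uniq_mem ?iota_uniq // mem_iota /= add0n ltnS leq_bigmax.
Qed.

Lemma blocks_rk n (r : 'I_n -> nat) i : rk (blocks r) i = r i.
Proof.
rewrite /rk find_map.
have -> : find (preim (fun k => [set i0 | r i0 == k]) (fun B : {set 'I_n} => i \in B))
            (iota 0 (\max_i r i).+1) = index (r i) (iota 0 (\max_i r i).+1).
  by apply: eq_find => k /=; rewrite inE eq_sym.
have hm : r i \in iota 0 (\max_i r i).+1 by rewrite mem_iota /= add0n ltnS leq_bigmax.
have hlt : index (r i) (iota 0 (\max_i r i).+1) < (\max_i r i).+1.
  by move: hm; rewrite -index_mem size_iota.
by have := nth_index 0 hm; rewrite nth_iota // add0n.
Qed.

Lemma fsched_filter n (D : seq {set 'I_n}) x :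
  fsched [seq B <- D | B != set0] x = fsched D x.
Proof.
elim: D x => [|B D IH] x; first by [].
rewrite fschedE -IH /=; case: ifP => hB; first by rewrite fschedE.
have -> : fblock B x = x.
  by apply/ffunP => i; rewrite ffunE; move/negbFE/eqP: hB => ->; rewrite inE.
by [].
Qed.

Lemma realize n (r : 'I_n -> nat) :
  exists D, is_update_schedule D /\ dynamics D = Gd (canon (labr r)).
Proof.
exists [seq B <- blocks r | B != set0]; split.
  split; first exact: filter_all.
  move=> i; rewrite count_filter -(blocks_count r i); apply: eq_count => B /=.
  by case: (boolP (i \in B)) => //= hi; apply/set0Pn; exists i.
have -> : dynamics [seq B <- blocks r | B != set0] = dynamics (blocks r).
  by apply/ffunP => x; rewrite !ffunE fsched_filter.
rewrite sched_dyn; last exact: blocks_count.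
by congr (Gd (canon _)); apply/ffunP => i; rewrite !ffunE !blocks_rk.
Qed.

Lemma atq_add n (b : 'I_n) j k : atq b (j + k) = atq (atq b j) k.
Proof. by rewrite /atq addnC iterD. Qed.

Lemma atq_neq n (i : 'I_n) k : 0 < k < n -> atq i k != i.
Proof.
move=> /andP[k0 kn]; apply/eqP => /(congr1 val); rewrite atq_val /=.
have hi := ltn_ord i.
case: (ltnP (i + k) n) => h.
  rewrite modn_small //; lia.
have -> : i + k = (i + k - n) + n by lia.
rewrite modnDr modn_small; lia.
Qed.

Lemma atq_inj n (b : 'I_n) j k : j < k < n -> atq b j != atq b k.
Proof.
move=> /andP[jk kn]; rewrite (_ : k = j + (k - j)); last by lia.
rewrite atq_add eq_sym; apply: atq_neq; lia.
Qed.

Definition probe n (p : 'I_n) : config n := [ffun j => j != p].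

Lemma probeB n (L : {ffun 'I_n -> lab}) (y : config n) i :
  i != ord_pred i -> ordS i != ord_pred i ->
  solvesL L (probe (ord_pred i)) y -> y i = (L i != LB).
Proof.
move=> h1 h2 hs; have hs' := hs; move/solvesLP: hs => h.
case hB: (L i == LB) => /=.
  have hb := solvesL_B hs' hB.
  by rewrite (h i) hB /r8 -!andbA hb !andbF.
rewrite (h i) hB /r8 !ffunE h1 h2 andbT.
case: (L (ord_pred i) == LF); last by rewrite ?ffunE eqxx.
case e: (y (ord_pred i)) => //.
by have := solvesL_le hs' e; rewrite ffunE eqxx.
Qed.

Lemma probeF n (L : {ffun 'I_n -> lab}) (y : config n) i :
  let b := ord_pred (ord_pred i) in
  ordS i != b -> ordS (ordS i) != b -> i != b -> ord_pred i != b ->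
  solvesL L (probe b) y -> L (ordS i) != LB -> y (ordS i) = (L i == LF).
Proof.
move=> b h1 h2 h3 h4 hs hnB; have hs' := hs; move/solvesLP: hs => h.
rewrite (h (ordS i)) ordSK (negbTE hnB) /r8 !ffunE h1 h2 !andbT.
case hF: (L i == LF); last by rewrite ?ffunE h3.
rewrite (h i) /r8 !ffunE h3.
have -> : (L i == LB) = false by rewrite (eqP hF).
rewrite ?ffunE h1 !andbT.
case hF2: (L (ord_pred i) == LF); last by rewrite ?ffunE h4.
rewrite (h (ord_pred i)) /r8 ?ffunE h4 ord_predK.
have -> : (L (ord_pred i) == LB) = false by rewrite (eqP hF2).
rewrite ?ffunE h3 andbT.
case: (L (ord_pred (ord_pred i)) == LF); last by rewrite eqxx.
case e: (y _) => //.
by have := solvesL_le hs' e; rewrite ffunE eqxx.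
Qed.

Lemma sol_exists n (r : 'I_n -> nat) (x : config n) :
  exists y, solvesL (canon (labr r)) x y.
Proof.
exists (fsched (blocks r) x); rewrite -solvesL_canon.
apply/solvesR_L => i.
have := @fsched_sem n (blocks r) x _ i.
rewrite /sel !blocks_rk; apply.
  by move=> j; rewrite blocks_count.
by rewrite has_count blocks_count.
Qed.

Lemma good_sol n (w : {ffun 'I_n -> lab}) (x : config n) :
  w \in Good n -> solvesL w x (Gd w x).
Proof.
move=> /good_realize [r hr]; have [y hy] := sol_exists r x.
by rewrite hr in hy; apply: Gd_solves hy.
Qed.

Lemma Gd_inj n (w w' : {ffun 'I_n -> lab}) :
  4 < n -> w \in Good n -> w' \in Good n -> Gd w = Gd w' -> w = w'.
Proof.
move=> hn hw hw' he.
have hs : forall x, solvesL w x (Gd w x) /\ solvesL w' x (Gd w x).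
  by move=> x; split; [exact: good_sol | rewrite he; exact: good_sol].
have D : forall (i : 'I_n) j k, j < 5 -> k < 5 -> j != k ->
    atq (ord_pred (ord_pred i)) j != atq (ord_pred (ord_pred i)) k.
  move=> i j k hj hk hjk.
  case: (ltngtP j k) => h.
  - by apply: atq_inj; lia.
  - by rewrite eq_sym; apply: atq_inj; lia.
  - by rewrite h eqxx in hjk.
have a0 : forall i : 'I_n, atq (ord_pred (ord_pred i)) 0 = ord_pred (ord_pred i) by [].
have a1 : forall i : 'I_n, atq (ord_pred (ord_pred i)) 1 = ord_pred i.
  by move=> i; rewrite /atq /= ord_predK.
have a2 : forall i : 'I_n, atq (ord_pred (ord_pred i)) 2 = i.
  by move=> i; rewrite /atq /= !ord_predK.
have a3 : forall i : 'I_n, atq (ord_pred (ord_pred i)) 3 = ordS i.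
  by move=> i; rewrite /atq /= !ord_predK.
have a4 : forall i : 'I_n, atq (ord_pred (ord_pred i)) 4 = ordS (ordS i).
  by move=> i; rewrite /atq /= !ord_predK.
have hB : forall i, (w i == LB) = (w' i == LB).
  move=> i.
  have d1 : i != ord_pred i by have := D i 2 1 isT isT isT; rewrite a2 a1.
  have d2 : ordS i != ord_pred i by have := D i 3 1 isT isT isT; rewrite a3 a1.
  have [s1 s2] := hs (probe (ord_pred i)).
  have := probeB d1 d2 s1; rewrite (probeB d1 d2 s2).
  by case: (w i == LB); case: (w' i == LB).
have hF : forall i, w (ordS i) != LB -> (w i == LF) = (w' i == LF).
  move=> i hi.
  have d3 : ordS i != ord_pred (ord_pred i) by have := D i 3 0 isT isT isT; rewrite a3 a0.
  have d4 : ordS (ordS i) != ord_pred (ord_pred i) by have := D i 4 0 isT isT isT; rewrite a4 a0.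
  have d5 : i != ord_pred (ord_pred i) by have := D i 2 0 isT isT isT; rewrite a2 a0.
  have d6 : ord_pred i != ord_pred (ord_pred i) by have := D i 1 0 isT isT isT; rewrite a1 a0.
  have [s1 s2] := hs (probe (ord_pred (ord_pred i))).
  have hi' : w' (ordS i) != LB by rewrite -hB.
  by rewrite -(probeF d3 d4 d5 d6 s1 hi) (probeF d3 d4 d5 d6 s2 hi').
apply/ffunP => i.
move: hw hw'; rewrite !in_setD !inE => /andP[_ /forallP c] /andP[_ /forallP c'].
have := c i; have := c' i; rewrite /okl -(hB (ordS i)).
case E: (w (ordS i) == LB).
  rewrite !andbT; have := hB i.
  by case: (w i) => [[]|]; case: (w' i) => [[]|].
have := hF i; rewrite E => /(_ isT); have := hB i.
by case: (w i) => [[]|]; case: (w' i) => [[]|].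
Qed.

Lemma dyn_set_eq n : 4 < n -> dyn_set n = (@Gd n) @: Good n.
Proof.
move=> hn; have i0 : 'I_n by exists 0; lia.
apply/setP => F; rewrite inE; apply/asboolP/imsetP.
  move=> [D [hD ->]]; exists (canon (labr (rk D))).
    by rewrite in_setD canon_notBad // canon_Canon.
  by apply: sched_dyn; case: hD.
move=> [w hw ->]; have [r hr] := good_realize hw.
have [D [hD hD']] := realize r.
by exists D; rewrite hD' hr.
Qed.

Lemma card_dyn n : 4 < n -> #|dyn_set n| = #|Good n|.
Proof.
move=> hn; rewrite dyn_set_eq //; apply: card_in_imset.
by move=> w w' hw hw'; apply: Gd_inj.
Qed.

Fixpoint allw (k : nat) : seq (seq lab) :=
  match k with
  | 0 => [:: [::]]
  | k'.+1 => map (cons LB) (allw k') ++ map (cons LE) (allw k') ++ map (cons LF) (allw k')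
  end.

Lemma mem_cons_map (c d : lab) s (l : seq (seq lab)) :
  (c :: s \in map (cons d) l) = (c == d) && (s \in l).
Proof.
apply/mapP/andP => [[p hp [-> ->]]|[/eqP -> hs]]; first by [].
by exists s.
Qed.

Lemma mem_allw k s : (s \in allw k) = (size s == k).
Proof.
elim: k s => [|k IH] [|c s] //=.
- by rewrite !mem_cat; apply/negP => /orP[|/orP[]] /mapP[].
- rewrite !mem_cat !mem_cons_map IH eqSS.
  by case: c => [[]|] /=; case: (size s == k).
Qed.

Lemma uniq_allw k : uniq (allw k).
Proof.
have ci : forall d : lab, injective (cons d) by move=> d x y [].
have hd : forall (d d' : lab) (l l' : seq (seq lab)), d != d' ->
    ~~ has (fun p => p \in map (cons d) l) (map (cons d') l').
  move=> d d' l l' hdd; rewrite has_map; apply/hasPn => p _ /=.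
  by rewrite mem_cons_map eq_sym (negbTE hdd).
elim: k => [|k IH] //=.
rewrite !cat_uniq !map_inj_uniq // IH /= has_cat negb_or !hd //.
Qed.

Lemma count_ffun n (P : pred (seq lab)) :
  #|[set w : {ffun 'I_n -> lab} | P (map w (enum 'I_n))]| = count P (allw n).
Proof.
set g := fun w : {ffun 'I_n -> lab} => map w (enum 'I_n).
have -> : #|[set w : {ffun 'I_n -> lab} | P (map w (enum 'I_n))]| =
          count (fun w => P (g w)) (enum {ffun 'I_n -> lab}).
  by rewrite cardE size_filter [in RHS]enumT; apply: eq_count => w; rewrite /= inE.
rewrite -count_map; apply/permP: P.
apply: uniq_perm.
- rewrite map_inj_uniq ?enum_uniq // => w1 w2 he.
  apply/ffunP => i.
  have := congr1 (fun s => nth LE s i) he; rewrite /g.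
  by rewrite -?enumT !(nth_map i) -?enumT ?size_enum_ord // nth_ord_enum.
- exact: uniq_allw.
- move=> s; rewrite mem_allw; apply/mapP/idP => [[w _ ->]|/eqP hs].
    by rewrite /g size_map size_enum_ord.
  exists [ffun i => nth LE s (val i)]; first by rewrite mem_enum.
  apply: (@eq_from_nth _ LE); first by rewrite /g size_map size_enum_ord.
  move=> k; rewrite hs => hk.
  by rewrite /g -?enumT (nth_map (Ordinal hk)) -?enumT ?size_enum_ord // ffunE (nth_ord_enum (Ordinal hk) (Ordinal hk)).
Qed.

Lemma next_enum_ord n (i : 'I_n) : next (enum 'I_n) i = ordS i.
Proof.
rewrite next_nth mem_enum /=.
have hn : 0 < n by case: n i => [[]|].
case def: (enum 'I_n) => [|y p].
  by move: (mem_enum 'I_n i); rewrite def.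
rewrite -def index_enum_ord.
have ey : y = nth y (enum 'I_n) 0 by rewrite def.
have -> : nth y p i = nth y (enum 'I_n) i.+1 by rewrite def.
apply: val_inj => /=.
case: (ltnP i.+1 n) => h.
  by rewrite nth_enum_ord // modn_small.
have e : i.+1 = n by have := ltn_ord i; lia.
rewrite nth_default; last by rewrite size_enum_ord.
by rewrite ey nth_enum_ord // e modnn.
Qed.

Lemma cycle_enum n (e : rel 'I_n) : cycle e (enum 'I_n) = [forall i, e i (ordS i)].
Proof.
apply/idP/forallP => [hc i|h].
  by rewrite -next_enum_ord; apply: next_cycle hc _; rewrite mem_enum.
apply: cycle_from_next; first exact: enum_uniq.
by move=> x _; rewrite next_enum_ord.
Qed.

Definition tc (k : nat) : nat := count (cycle okl) (allw k).

Lemma card_Canon n : #|Canon n| = tc n.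
Proof.
rewrite /tc -count_ffun; apply: eq_card => w.
by rewrite !inE cycle_map cycle_enum.
Qed.

Definition NN (k : nat) (a b : lab) : nat := count (fun p => path okl a (rcons p b)) (allw k).

Lemma count_andl (T : Type) (c : bool) (Q : pred T) s :
  count (fun x => c && Q x) s = c * count Q s.
Proof. by case: c; rewrite ?mul1n ?mul0n ?count_pred0 //; apply: eq_count. Qed.

Lemma tcN m : tc m.+1 = NN m LB LB + NN m LE LE + NN m LF LF.
Proof.
by rewrite /tc /= !count_cat !count_map addnA.
Qed.

Lemma NS k a b :
  NN k.+1 a b = okl a LB * NN k LB b + okl a LE * NN k LE b + okl a LF * NN k LF b.
Proof.
rewrite /NN /= !count_cat !count_map addnA.
by rewrite /preim /= !count_andl.
Qed.

Lemma NBE k b : NN k LB b = NN k LE b.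
Proof. by apply: eq_count => p; case: p => [|c p] //=; case: c => [[]|]. Qed.

Lemma N_rec k a b : NN k.+2 a b + NN k a b = 3 * NN k.+1 a b.
Proof.
have : a = LB \/ a = LE \/ a = LF by case: a => [[]|]; auto.
by case=> [->|[->|->]]; rewrite !(NS k.+1) !(NS k) ?NBE /=; lia.
Qed.

Lemma tc_rec m : tc m.+3 + tc m.+1 = 3 * tc m.+2.
Proof.
rewrite !tcN.
have h1 := N_rec m LB LB; have h2 := N_rec m LE LE; have h3 := N_rec m LF LF.
lia.
Qed.

Lemma tc1 : tc 1 = 3. Proof. by []. Qed.
Lemma tc2 : tc 2 = 7. Proof. by []. Qed.

Definition allE n : {ffun 'I_n -> lab} := [ffun=> LE].
Definition allB n : {ffun 'I_n -> lab} := [ffun=> LB].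
Definition NB n := [set w : {ffun 'I_n -> lab} | [forall i, w i != LB]].

Lemma card_NB n : #|NB n| = 2 ^ n.
Proof.
pose h := fun b : {ffun 'I_n -> bool} => [ffun i => if b i then LF else LE] : {ffun 'I_n -> lab}.
have hinj : injective h.
  move=> b1 b2 /ffunP he; apply/ffunP => i; have := he i; rewrite !ffunE.
  by case: (b1 i); case: (b2 i).
have -> : NB n = h @: setT.
  apply/setP => w; rewrite inE; apply/forallP/imsetP => [hw|[b _ ->] i].
    exists [ffun i => w i == LF]; first by rewrite inE.
    apply/ffunP => i; rewrite !ffunE; have := hw i.
    by case: (w i) => [[]|].
  by rewrite ffunE; case: (b i).
by rewrite card_imset // cardsT card_ffun card_bool card_ord.
Qed.

Lemma Bad_eq n : 0 < n -> Bad n = (NB n :\ allE n) :|: [set allB n].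
Proof.
move=> hn; have i0 : 'I_n by exists 0.
apply/setP => w; rewrite !inE.
have -> : [exists i, w i != LE] = (w != allE n).
  apply/existsP/idP => [[i hi]|hw].
    by apply/negP => /eqP he; move: hi; rewrite he ffunE eqxx.
  case: (boolP [exists i, w i != LE]) => [/existsP //|].
  rewrite negb_exists => /forallP h; move: hw; rewrite (_ : w = allE n) ?eqxx //.
  by apply/ffunP => i; rewrite ffunE; apply/eqP; move: (h i); rewrite negbK.
have -> : [forall i, w i == LB] = (w == allB n).
  apply/forallP/eqP => [h|-> i]; last by rewrite ffunE.
  by apply/ffunP => i; rewrite ffunE; apply/eqP.
by rewrite andbC.
Qed.

Lemma card_Bad n : 0 < n -> #|Bad n| = 2 ^ n.
Proof.
move=> hn; have i0 : 'I_n by exists 0.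
rewrite Bad_eq // cardsU cards1.
have -> : (NB n :\ allE n) :&: [set allB n] = set0.
  apply/setP => w; rewrite !inE; apply/negP => /andP[/andP[_ /forallP h] /eqP he].
  by move: (h i0); rewrite he ffunE.
rewrite cards0 subn0.
have hE : allE n \in NB n by rewrite inE; apply/forallP => i; rewrite ffunE.
have := cardsD1 (allE n) (NB n); rewrite hE card_NB.
have : 0 < 2 ^ n by rewrite expn_gt0.
lia.
Qed.

Lemma card_Good n : 0 < n -> #|Good n| + 2 ^ n = tc n.
Proof.
move=> hn.
have hsub : Bad n \subset Canon n.
  apply/subsetP => w; rewrite inE => /orP[/andP[/forallP h _]|/forallP h];
    rewrite inE; apply/forallP => i; rewrite /okl.
    by rewrite (negbTE (h (ordS i))) andbF.
  by rewrite (eqP (h i)).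
rewrite /Good cardsD (setIidPr hsub) -card_Bad // -card_Canon.
have := subset_leq_card hsub; lia.
Qed.

Local Open Scope ring_scope.

Lemma golden_inv (R : realType) :
  golden R ^+ 2 + (golden R ^+ 2)^-1 = 3%:R.
Proof.
rewrite /golden; set s := Num.sqrt (5%:R : R).
have hs : s ^+ 2 = 5%:R by rewrite sqr_sqrtr // ler0n.
have hs0 : 0 <= s by rewrite sqrtr_ge0.
have ha : ((1 + s) / 2%:R) ^+ 2 = (3%:R + s) / 2%:R.
  apply/eqP; rewrite -subr_eq0.
  have -> : ((1 + s) / 2%:R) ^+ 2 - (3%:R + s) / 2%:R = (s ^+ 2 - 5%:R) / 4%:R by field.
  by rewrite hs subrr mul0r.
rewrite ha.
have hnz : (3%:R + s) / 2%:R != 0 :> R.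
  by rewrite mulf_neq0 // ?invr_eq0 ?pnatr_eq0 //; apply/negP => /eqP h; move: hs0; rewrite -(subr0 s) -h; lra.
have hxy : (3%:R + s) / 2%:R * ((3%:R - s) / 2%:R) = 1 :> R.
  apply/eqP; rewrite -subr_eq0.
  have -> : (3%:R + s) / 2%:R * ((3%:R - s) / 2%:R) - 1 = (5%:R - s ^+ 2) / 4%:R :> R by field.
  by rewrite hs subrr mul0r.
have -> : ((3%:R + s) / 2%:R)^-1 = (3%:R - s) / 2%:R.
  by apply: (mulfI hnz); rewrite mulfV // hxy.
by field.
Qed.

Lemma tc_closed (R : realType) k :
  (tc k.+1)%:R = (golden R ^+ 2) ^+ k.+1 + ((golden R ^+ 2)^-1) ^+ k.+1 :> R.
Proof.
set a := golden R ^+ 2; set b := a^-1.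
have hab : a + b = 3%:R by exact: golden_inv.
have ha0 : a != 0.
  by apply/negP => /eqP h; move: hab; rewrite /b h invr0 addr0 => /eqP; rewrite eq_sym pnatr_eq0.
have hab1 : a * b = 1 by rewrite /b mulfV.
suff H : forall j, (tc j.+1)%:R = a ^+ j.+1 + b ^+ j.+1 :> R /\
                   (tc j.+2)%:R = a ^+ j.+2 + b ^+ j.+2 :> R by case: (H k).
elim=> [|j [IH1 IH2]].
  split; first by rewrite tc1 !expr1 hab.
  rewrite tc2.
  have -> : a ^+ 2 + b ^+ 2 = (a + b) ^+ 2 - 2%:R * (a * b) by ring.
  by rewrite hab hab1; ring.
split => //.
have hr := congr1 (fun m => m%:R : R) (tc_rec j); move: hr => /=.
rewrite natrD natrM => hr.
have -> : (tc j.+3)%:R = 3%:R * (tc j.+2)%:R - (tc j.+1)%:R :> R.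
  by rewrite -hr addrK.
rewrite IH1 IH2 -hab -[a ^+ j.+1 + b ^+ j.+1]mul1r -hab1.
rewrite !exprS; ring.
Qed.

Theorem mainTheorem6 (R : realType) (n : nat) (hn : (5 <= n)%N) :
  mu8 R n =
  ((golden R) ^+ (2 * n) + (golden R) ^- (2 * n) - 2%:R ^+ n)
    / (3%:R ^+ n - 2%:R ^+ n.+1 + 2%:R).
Proof.
rewrite /mu8 card_dyn //; congr (_ / _).
have hn0 : (0 < n)%N by apply: leq_trans hn.
have hG := card_Good hn0.
have -> : (#|Good n|%:R : R) = (tc n)%:R - (2 ^ n)%:R by rewrite -hG natrD addrK.
case: n hn {hG hn0} => [|m] // hm.
have e1 : golden R ^+ (2 * m.+1) = (golden R ^+ 2) ^+ m.+1 by rewrite -exprM.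
by rewrite tc_closed natrX e1 exprVn.
Qed.
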